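(* Consider the adjustable robust counterpart problem \[ \begin{aligned} & \underset{q_{S},\pi_{T},f,x}{\text{minimize}} && x\\ & \text{such that } && \forall q_{R}\in Q,\ \exists q_{T},\pi_{S},\pi_{R},\phi\\ & \text{subject to} && c\left(q_{S},q_{T}\right)\leq x\\ & && \textstyle\sum_{j\in\partial i}\phi_{ji}+q_{i}=0 \quad \forall i\in V\\ & && \pi_{j}-\pi_{i}=-f_{ij}\left(\phi_{ij}\right) \quad \forall (i,j)\in E\\ & && \textstyle\sum_{i\in V}q_{i}=0\\ & && \underline{\pi}_{i}\leq\pi_{i}\leq\overline{\pi}_{i} \quad \forall i\in V. \end{aligned} \] There exists a function $\widetilde{q}^{T}:\mathbb{R}^{|R|+|S|+|T|}\times\mathcal{F}\rightarrow\mathbb{R}^{|T|}$ and a function $\widetilde{\pi}^{R\cup S}:\mathbb{R}^{|R|+|S|+|T|}\times\mathcal{F}\rightarrow\mathbb{R}^{|R\cup S|}$ such that this adjustable robust counterpart reads \[ \begin{aligned} & \underset{q_{S},\pi_{T},f}{\text{minimize}} && c\left(q_{S},\widetilde{q}_{T}^{T}\left(\overline{q}_{R},q_{S},\pi_{T},f\right)\right)\\ & \text{subject to} && \underline{\pi}_{i}\leq\widetilde{\pi}_{i}^{R\cup S}\left(\underline{q}_{R},q_{S},\pi_{T},f\right) \quad \forall i\in R\cup S\\ & && \widetilde{\pi}_{i}^{R\cup S}\left(\overline{q}_{R},q_{S},\pi_{T},f\right)\leq\overline{\pi}_{i} \quad \forall i\in R\cup S\\ & && \underline{\pi}_{i}\leq\pi_{i}\leq\overline{\pi}_{i}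 \quad \forall i\in T, \end{aligned} \] where $\underline{q}_{R}:=\{\underline{q}_{i}\}_{i\in R}$ and $\overline{q}_{R}:=\{\overline{q}_{i}\}_{i\in R}$ are respectively the minimum and maximum withdrawal values at the consumer nodes.
   Context: $G=(V,E)$ is a connected directed graph such that $(i,j)\in E$ iff $(j,i)\in E$; $\partial i=\{j:(j,i)\in E\}$. Productions $q:V\to\mathbb{R}$ satisfy $\sum_{i\in V}q_i=0$; flows $\phi:E\to\mathbb{R}$ are skew-symmetric, $\phi_{ij}=-\phi_{ji}$. Potentials $\pi:V\to\mathbb{R}$ satisfy $\pi_j-\pi_i=-f_{ij}(\phi_{ij})$, where the dissipation functions $f_{ij}$ are continuous, strictly monotone (so that potential decreases along the direction of the flow), satisfy $f_{ij}(x)=-f_{ji}(-x)$, and are chosen from an admissible set $\mathcal{F}$. The node set is partitioned into non-empty subsets $V=S\cup T\cup R$: sources $i\in S$ inject flow at cost $g_i(q_i)$; terminals $i\in T$ pay $h_i(q_i)$ with $h_i$ non-decreasing; internal customers $i\in R$ have uncertain production $q_i\in[\underline{q}_i,\overline{q}_i]$, and $Q=\prod_{i\in R}[\underline{q}_i,\overline{q}_i]$. The cost is $c(q_S,q_T)=\sum_{i\in S}g_i(q_i)-\sum_{i\in T}h_i(q_i)$. Non-adjustable (operational) variables: $q_S=\{q_i\}_{i\in S}$, $\pi_T=\{\pi_i\}_{i\in T}$, and $f\in\mathcal{F}$; adjustable variables: $q_T$, $\pi_S$, $\pi_R$, $\phi$. The functions $\widetilde{\pi}^{R\cup S}$ and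 $\widetilde{q}^{T}$ return, respectively, the (unique) potentials at $R\cup S$ and the productions at $T$ solving the flow network equations given $(q_R,q_S,\pi_T,f)$. *)

(* Defs.v *)
From HB Require Import structures.
From mathcomp Require Import all_boot all_order all_algebra.
From mathcomp Require Import all_classical all_reals all_analysis.
Set Implicit Arguments. Unset Strict Implicit. Unset Printing Implicit Defensive.
Import Order.TTheory GRing.Theory Num.Theory.
Import numFieldTopology.Exports numFieldNormedType.Exports.
Local Open Scope ring_scope.

Section NetDefs.
Variables (R : realType) (V : finType) (E : rel V).

(* A family of dissipation functions f i j : R -> R, one per ordered pair;
   only the values on edges (i,j) \in E matter. *)
Definition dissip := V -> V -> R -> R.

Definition dissipation_ok (f : dissip) : Prop :=
  forall i j, E i j ->
    [/\ continuous (f i j : R -> R),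
        (forall x y : R, x < y -> f i j x < f i j y) &
        (forall x : R, f i j x = - f j i (- x))].

Definition flow_eqs (f : dissip) (q pi : V -> R) (phi : V -> V -> R) : Prop :=
  [/\ (forall i j, E i j -> phi i j = - phi j i),
      (forall i, \sum_(j | E j i) phi j i + q i = 0) &
      (forall i j, E i j -> pi j - pi i = - f i j (phi i j))].

Definition network_sol (S T Rc : {set V}) (f : dissip) (qR qS piT : V -> R)
    (q pi : V -> R) (phi : V -> V -> R) : Prop :=
  [/\ flow_eqs f q pi phi,
      (forall i, i \in Rc -> q i = qR i),
      (forall i, i \in S -> q i = qS i) &
      (forall i, i \in T -> pi i = piT i)].

Definition cost (S T : {set V}) (g h : V -> R -> R) (qS qT : V -> R) : R :=
  \sum_(i in S) g i (qS i) - \sum_(i in T) h i (qT i).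

(* Feasibility of (q_S, pi_T, f, x) in the adjustable robust counterpart
   (for fixed f; f \in F is imposed separately). *)
Definition arc_feasible (S T Rc : {set V}) (g h : V -> R -> R)
    (qlo qhi pilo pihi : V -> R) (qS piT : V -> R) (f : dissip) (x : R) : Prop :=
  forall qR : V -> R, (forall i, i \in Rc -> qlo i <= qR i <= qhi i) ->
    exists (q pi : V -> R) (phi : V -> V -> R),
      [/\ network_sol S T Rc f qR qS piT q pi phi,
          cost S T g h qS q <= x,
          \sum_(i : V) q i = 0 &
          (forall i, pilo i <= pi i <= pihi i)].

End NetDefs.

(* Main.v *)
Require Import Defs.
From HB Require Import structures.
From mathcomp Require Import all_boot all_order all_algebra.
From mathcomp Require Import all_classical all_reals all_analysis.
Import Order.TTheory GRing.Theory Num.Theory.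
From mathcomp Require Import lra.
Set Implicit Arguments. Unset Strict Implicit. Unset Printing Implicit Defensive.
Local Open Scope ring_scope.

Lemma mono_le (R : realType) (f : R -> R) a b :
  (forall x y, x < y -> f x < f y) -> f a <= f b -> a <= b.
Proof.
move=> Hm Hf; rewrite leNgt; apply/negP => /Hm; by rewrite ltNge Hf.
Qed.

Lemma qsum (R : realType) (V : finType) (E : rel V) (f : dissip R V) q pi phi :
  (forall i j, E i j = E j i) -> flow_eqs E f q pi phi ->
  forall i, q i = \sum_(j | E j i) phi i j.
Proof.
move=> Hsym [Hsk Hfl _] i.
have := Hfl i.
rewrite (eq_bigr (fun j => - phi i j)); last first.
  by move=> j Eji; rewrite (Hsk j i Eji).
rewrite sumrN; lra.
Qed.

Lemma edge_le (R : realType) (V : finType) (E : rel V) (f : dissip R V)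
   q pi phi q' pi' phi' i j :
  dissipation_ok E f -> flow_eqs E f q pi phi -> flow_eqs E f q' pi' phi' ->
  E i j -> pi' i - pi' j <= pi i - pi j -> phi' i j <= phi i j.
Proof.
move=> Hok [_ _ H1] [_ _ H2] Eij Hle.
case: (Hok i j Eij) => _ Hm _.
apply: (@mono_le R (f i j) _ _ Hm).
have h1 := H1 i j Eij; have h2 := H2 i j Eij. lra.
Qed.

Lemma edge_eq (R : realType) (V : finType) (E : rel V) (f : dissip R V)
   q pi phi q' pi' phi' i j :
  flow_eqs E f q pi phi -> flow_eqs E f q' pi' phi' ->
  E i j -> phi i j = phi' i j -> pi' i - pi' j = pi i - pi j.
Proof.
move=> [_ _ H1] [_ _ H2] Eij He.
have h1 := H1 i j Eij; have h2 := H2 i j Eij. rewrite He in h1. lra.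
Qed.

Lemma maxprinciple (R : realType) (V : finType) (E : rel V) (f : dissip R V)
  (q pi q' pi' : V -> R) (phi phi' : V -> V -> R) (t : V) :
  (forall i j, E i j = E j i) -> (forall i j, connect E i j) ->
  dissipation_ok E f -> flow_eqs E f q pi phi -> flow_eqs E f q' pi' phi' ->
  pi t <= pi' t -> (forall i, pi i <= pi' i \/ q i <= q' i) ->
  forall i, pi i <= pi' i.
Proof.
move=> Hsym Hconn Hok F1 F2 Ht Hyp.
pose d := fun i => pi i - pi' i.
have [i0 Hi0] : exists i0, forall i, d i <= d i0.
  case: (@Order.TotalTheory.arg_maxP _ _ _ t xpredT d) => //= i0 _ H.
  by exists i0 => i; apply: H.
suff : d i0 <= 0 by move=> H i; have := Hi0 i; move: H; rewrite /d; lra.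
rewrite leNgt; apply/negP => pos.
have key : forall i j, d i = d i0 -> E i j -> d j = d i0.
  move=> i j Hdi Eij.
  have Hq : q i <= q' i.
    case: (Hyp i) => // Hle; exfalso; move: Hdi pos; rewrite /d; lra.
  rewrite (qsum Hsym F1) (qsum Hsym F2) in Hq.
  have S0 : \sum_(k | E k i) (phi i k - phi' i k) = 0.
    apply/le_anti/andP; split.
      rewrite sumrB; lra.
    apply: sumr_ge0 => k Eki; rewrite subr_ge0.
    apply: (edge_le Hok F1 F2); first by rewrite Hsym.
    have := Hi0 k; move: Hdi; rewrite /d; lra.
  have Eji : E j i by rewrite Hsym.
  have := psumr_eq0P _ S0 Eji.
  have Hnn : forall k, E k i -> 0 <= phi i k - phi' i k.
    move=> k Eki; rewrite subr_ge0.
    apply: (edge_le Hok F1 F2); first by rewrite Hsym.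
    have := Hi0 k; move: Hdi; rewrite /d; lra.
  move=> /(_ Hnn) H0.
  have He : phi i j = phi' i j by lra.
  have := edge_eq F1 F2 Eij He.
  move: Hdi; rewrite /d; lra.
pose a := [pred k | d k == d i0].
have Hcl : fingraph.closed E a.
  move=> x y Exy; rewrite !inE; apply/eqP/eqP => H.
    exact: key H Exy.
  by apply: key H _; rewrite Hsym.
have := closed_connect Hcl (Hconn i0 t).
rewrite !inE eqxx => /esym/eqP Hdt.
move: Hdt pos Ht; rewrite /d; lra.
Qed.

Lemma qT_compare (R : realType) (V : finType) (E : rel V) (f : dissip R V)
  (q pi q' pi' : V -> R) (phi phi' : V -> V -> R) (t : V) :
  (forall i j, E i j = E j i) ->
  dissipation_ok E f -> flow_eqs E f q pi phi -> flow_eqs E f q' pi' phi' ->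
  (forall i, pi i <= pi' i) -> pi t = pi' t -> q' t <= q t.
Proof.
move=> Hsym Hok F1 F2 Hle Ht.
rewrite (qsum Hsym F1) (qsum Hsym F2) -subr_ge0 -sumrB.
apply: sumr_ge0 => j Ejt; rewrite subr_ge0.
apply: (edge_le Hok F1 F2); first by rewrite Hsym.
have := Hle j; lra.
Qed.

Lemma sumq0 (R : realType) (V : finType) (E : rel V) (f : dissip R V) q pi phi :
  (forall i j, E i j = E j i) -> flow_eqs E f q pi phi -> \sum_i q i = 0.
Proof.
move=> Hsym F1.
rewrite (eq_bigr _ (fun i _ => qsum Hsym F1 i)).
set X := (X in X = 0).
have HX : X = \sum_i \sum_j (if E j i then phi i j else 0).
  by rewrite /X; apply: eq_bigr => i _; rewrite big_mkcond.
have : X = - X.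
  rewrite {1}HX exchange_big /= HX -sumrN.
  apply: eq_bigr => j _; rewrite -sumrN.
  apply: eq_bigr => i _.
  case: F1 => Hsk _ _.
  rewrite Hsym; case Eij: (E i j); last by rewrite oppr0.
  by rewrite (Hsk i j Eij).
lra.
Qed.

Lemma compare (R : realType) (V : finType) (E : rel V) (S T Rc : {set V})
  (f : dissip R V) (qR1 qR2 qS piT q1 pi1 q2 pi2 : V -> R)
  (phi1 phi2 : V -> V -> R) (t : V) :
  (forall i j, E i j = E j i) -> (forall i j, connect E i j) ->
  S :|: T :|: Rc = [set: V] -> t \in T -> dissipation_ok E f ->
  network_sol E S T Rc f qR1 qS piT q1 pi1 phi1 ->
  network_sol E S T Rc f qR2 qS piT q2 pi2 phi2 ->
  (forall i, i \in Rc -> qR1 i <= qR2 i) ->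
  (forall i, pi1 i <= pi2 i) /\ (forall i, i \in T -> q2 i <= q1 i).
Proof.
move=> Hsym Hconn HU tT Hok [F1 R1 S1 T1] [F2 R2 S2 T2] Hq.
have Hpi : forall i, pi1 i <= pi2 i.
  apply: (maxprinciple Hsym Hconn Hok F1 F2 (t := t)).
    by rewrite T1 // T2.
  move=> i; have : i \in S :|: T :|: Rc by rewrite HU inE.
  rewrite !inE => /orP [/orP [iS|iT]|iR].
  - by right; rewrite S1 // S2.
  - by left; rewrite T1 // T2.
  - by right; rewrite R1 // R2 //; apply: Hq.
split => // i iT.
apply: (qT_compare Hsym Hok F1 F2 Hpi).
by rewrite T1 // T2.
Qed.

Theorem theorem1 (R : realType) (V : finType) (E : rel V)
  (S T Rc : {set V})
  (F : dissip R V -> Prop)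
  (g h : V -> R -> R) (qlo qhi pilo pihi : V -> R) :
  (* G connected, (i,j) \in E iff (j,i) \in E *)
  (forall i j, E i j = E j i) ->
  (forall i j, connect E i j) ->
  (* V = S u T u R, a partition into non-empty parts *)
  S :|: T :|: Rc = [set: V] ->
  [disjoint S & T] -> [disjoint S & Rc] -> [disjoint T & Rc] ->
  S != finset.set0 -> T != finset.set0 -> Rc != finset.set0 ->
  (* admissible dissipation functions *)
  (forall f, F f -> dissipation_ok E f) ->
  (* the flow network equations are solvable for every admissible f and data *)
  (forall f, F f -> forall qR qS piT : V -> R,
     exists (q pi : V -> R) (phi : V -> V -> R),
       network_sol E S T Rc f qR qS piT q pi phi) ->
  (* h_i non-decreasing for terminals *)
  (forall i, i \in T -> forall x y : R, x <= y -> h i x <= h i y) ->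
  (* Q = prod_{i in R} [qlo_i, qhi_i] is a product of (non-empty) intervals *)
  (forall i, i \in Rc -> qlo i <= qhi i) ->
  exists (qT_t : (V -> R) -> (V -> R) -> (V -> R) -> dissip R V -> (V -> R))
         (piRS_t : (V -> R) -> (V -> R) -> (V -> R) -> dissip R V -> (V -> R)),
    (* they return the productions at T and potentials at R u S solving
       the network equations given (q_R, q_S, pi_T, f) *)
    (forall (qR qS piT : V -> R) (f : dissip R V), F f ->
       exists (q pi : V -> R) (phi : V -> V -> R),
         [/\ network_sol E S T Rc f qR qS piT q pi phi,
             (forall i, i \in T -> q i = qT_t qR qS piT f i) &
             (forall i, i \in S :|: Rc -> pi i = piRS_t qR qS piT f i)]) /\
    (* the ARC (in epigraph form) coincides with the reduced problem *)
    (forall (qS piT : V -> R) (f : dissip R V) (x : R), F f ->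
       (arc_feasible E S T Rc g h qlo qhi pilo pihi qS piT f x <->
        [/\ (forall i, i \in S :|: Rc -> pilo i <= piRS_t qlo qS piT f i),
            (forall i, i \in S :|: Rc -> piRS_t qhi qS piT f i <= pihi i),
            (forall i, i \in T -> pilo i <= piT i <= pihi i) &
            cost S T g h qS (qT_t qhi qS piT f) <= x])).
Proof.
move=> Hsym Hconn HU _ _ _ _ HT _ Hok Hex Hh Hbox.
have [t tT] : exists t, t \in T by apply/set0Pn.
have Hch : forall x : (V -> R) * (V -> R) * (V -> R) * dissip R V,
    exists u : (V -> R) * (V -> R), F x.2 -> exists phi,
      network_sol E S T Rc x.2 x.1.1.1 x.1.1.2 x.1.2 u.1 u.2 phi.
  move=> [[[qR qS] piT] f] /=.
  case: (pselect (F f)) => Ff.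
    have [q [pi [phi Hs]]] := Hex f Ff qR qS piT.
    by exists (q, pi) => _; exists phi.
  by exists (fun _ => 0, fun _ => 0).
have [e He] := choice Hch.
exists (fun qR qS piT f => (e (qR, qS, piT, f)).1).
exists (fun qR qS piT f => (e (qR, qS, piT, f)).2).
split.
  move=> qR qS piT f Ff.
  have [phi Hs] := He (qR, qS, piT, f) Ff.
  by exists (e (qR, qS, piT, f)).1, (e (qR, qS, piT, f)).2, phi.
move=> qS piT f x Ff.
have Hokf := Hok f Ff.
have [philo Slo] := He (qlo, qS, piT, f) Ff.
have [phihi Shi] := He (qhi, qS, piT, f) Ff.
move: Slo Shi => /= Slo Shi.
set qlo' := (e (qlo, qS, piT, f)).1 in Slo *.
set pilo' := (e (qlo, qS, piT, f)).2 in Slo *.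
set qhi' := (e (qhi, qS, piT, f)).1 in Shi *.
set pihi' := (e (qhi, qS, piT, f)).2 in Shi *.
split.
- move=> Harc.
  have Blo : forall i, i \in Rc -> qlo i <= qlo i <= qhi i.
    by move=> i iR; rewrite lexx Hbox.
  have Bhi : forall i, i \in Rc -> qlo i <= qhi i <= qhi i.
    by move=> i iR; rewrite lexx Hbox.
  have [q1 [pi1 [phi1 [Hs1 _ _ Hb1]]]] := Harc qlo Blo.
  have [q2 [pi2 [phi2 [Hs2 Hc2 _ Hb2]]]] := Harc qhi Bhi.
  have [Ha _] := compare Hsym Hconn HU tT Hokf Hs1 Slo (fun i _ => le_refl _).
  have [Hb _] := compare Hsym Hconn HU tT Hokf Slo Hs1 (fun i _ => le_refl _).
  have [Hc Hc'] := compare Hsym Hconn HU tT Hokf Hs2 Shi (fun i _ => le_refl _).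
  have [Hd Hd'] := compare Hsym Hconn HU tT Hokf Shi Hs2 (fun i _ => le_refl _).
  split.
  + move=> i _; have /andP[? ?] := Hb1 i; have := Ha i; lra.
  + move=> i _; have /andP[? ?] := Hb2 i; have := Hd i; lra.
  + move=> i iT; case: Hs1 => _ _ _ HT1; rewrite -(HT1 i iT); exact: Hb1.
  + apply: le_trans Hc2; rewrite /cost lerD2l lerN2.
    apply: ler_sum => i iT.
    have := Hc' i iT; have := Hd' i iT => h1 h2.
    have -> : q2 i = qhi' i by apply/le_anti; rewrite h1 h2.
    by [].
- move=> [H1 H2 H3 H4] qR Hq.
  have [q [pi [phi Hs]]] := Hex f Ff qR qS piT.
  have [Ha _] := compare Hsym Hconn HU tT Hokf Slo Hs (fun i iR => proj1 (andP (Hq i iR))).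
  have [Hb Hb'] := compare Hsym Hconn HU tT Hokf Hs Shi (fun i iR => proj2 (andP (Hq i iR))).
  exists q, pi, phi; split => //.
  + apply: le_trans H4; rewrite /cost lerD2l lerN2.
    by apply: ler_sum => i iT; apply: Hh => //; apply: Hb'.
  + by case: Hs => Hf _ _ _; apply: sumq0 Hf.
  + move=> i; have : i \in S :|: T :|: Rc by rewrite HU inE.
    have Hin : forall j, j \in S :|: Rc -> pilo j <= pi j <= pihi j.
      move=> j jSR.
      have := H1 j jSR; have := H2 j jSR; have := Ha j; have := Hb j.
      by move=> *; apply/andP; split; lra.
    rewrite !inE => /orP [/orP [iS|iT]|iR].
    * by apply: Hin; rewrite inE iS.
    * case: Hs => _ _ _ HT1; rewrite (HT1 i iT); exact: H3.
    * by apply: Hin; rewrite inE iR orbT.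
Qed.
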